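(* For $v\in S_n$ and $x\in\mathfrak{ut}_n$, $$\chi^v(x)=\prod_{\substack{1\le i<j\le n\\ j-i\le\iota_i(v)}}\mathbf 1(x_{ij})\prod_{\substack{1\le i<j\le n\\ j-i=\iota_i(v)+1}}(\mathrm{reg}-\mathbf 1)(x_{ij})\prod_{\substack{1\le i<j\le n\\ j-i>\iota_i(v)+1}}\mathrm{reg}(x_{ij}),$$ where for $t\in\mathbb{F}_q$, $\mathbf 1(t)=1$ and $\mathrm{reg}(t)=q$ if $t=0$, $\mathrm{reg}(t)=0$ if $t\ne0$.
   Context: Let $q$ be a prime power and $\mathfrak{ut}_n$ the additive group of strictly upper triangular $n\times n$ matrices over $\mathbb{F}_q$. For $w\in S_n$ (one-line notation), $\iota_k(w)=\#\{i<w^{-1}(k):w(i)>k\}$ and $\mathfrak{ut}_w=\{x\in\mathfrak{ut}_n:x_{ij}\ne0\Rightarrow0<j-i\le\iota_i(w)\}$; these subgroups form a lattice closed under intersection and sum. In the associated normal lattice supercharacter theory, the supercharacter $\chi^w$ is $\sum_\psi\psi(1)\psi$, summed over irreducible characters $\psi$ of $\mathfrak{ut}_n$ such that $\mathfrak{ut}_w$ is the largest member of the lattice contained in $\ker\psi$. The functions $\mathbf 1$ and $\mathrm{reg}$ are the trivial and regular characters of the additive group $\mathbb{F}_q^+$. *)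

(* Defs.v *)
From HB Require Import structures.
From mathcomp Require Import all_boot all_order all_algebra all_fingroup all_field all_character.
Set Implicit Arguments. Unset Strict Implicit. Unset Printing Implicit Defensive.
Import GRing.Theory Num.Theory.
Local Open Scope ring_scope.

Section Defs.
Variables (F : finFieldType) (n : nat).

(* 'M[F]_n is a finZmodType, hence (finalg) a finGroupType whose group law is
   matrix addition: this is the additive group of n x n matrices over F.
   Indices are 0-based ('I_n); all conditions only involve j - i. *)

Definition ut_set : {set 'M[F]_n} :=
  [set x : 'M[F]_n | [forall i : 'I_n, forall j : 'I_n, (x i j != 0) ==> (i < j)%N]].

Lemma ut_group_set : group_set ut_set.
Proof.
apply/andP; split.
  by rewrite inE; apply/forallP=> i; apply/forallP=> j; rewrite mxE eqxx.
apply/subsetP=> z /imset2P[x y]; rewrite !inE => /forallP Hx /forallP Hy ->.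
apply/forallP=> i; apply/forallP=> j; apply/implyP.
have -> : (x * y)%g = x + y by [].
rewrite mxE.
have /implyP hx := forallP (Hx i) j; have /implyP hy := forallP (Hy i) j.
case: (x i j =P 0) => [-> | /eqP nx _]; last exact: hx.
rewrite add0r; exact: hy.
Qed.

Canonical UT : {group 'M[F]_n} := Group ut_group_set.

Definition iota_w (w : 'S_n) (k : 'I_n) : nat :=
  #|[set i : 'I_n | (i < (w^-1)%g k)%N && (k < w i)%N]|.

Definition ut_w (w : 'S_n) : {set 'M[F]_n} :=
  [set x : 'M[F]_n | [forall i : 'I_n, forall j : 'I_n,
     (x i j != 0) ==> ((i < j)%N && (j - i <= iota_w w i)%N)]].

Definition largest_in (w : 'S_n) (A : {set 'M[F]_n}) : bool :=
  (ut_w w \subset A) && [forall u : 'S_n, (ut_w u \subset A) ==> (ut_w u \subset ut_w w)].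

Definition superchar (w : 'S_n) (x : 'M[F]_n) : algC :=
  \sum_(i : Iirr UT | largest_in w (cfker 'chi[UT]_i)) 'chi[UT]_i 1%g * 'chi[UT]_i x.

End Defs.

Definition one_char (F : finFieldType) (t : F) : algC := 1.
Definition reg_char (F : finFieldType) (t : F) : algC :=
  if t == 0 then (#|F|)%:R else 0.

(* Main.v *)
Require Import Defs.
From HB Require Import structures.
From mathcomp Require Import all_boot all_order all_algebra all_fingroup all_field all_character.
From mathcomp Require Import zify.
Set Implicit Arguments. Unset Strict Implicit. Unset Printing Implicit Defensive.
Import GRing.Theory Num.Theory.

Section Comb.
Variable n : nat.

Lemma iota_swapE (v s : 'S_n) (c : 'I_n) :
  iota_w (v * s) c = #|[set y | ((v^-1)%g y < (v^-1)%g ((s^-1)%g c))%N && (c < s y)%N]|.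
Proof.
rewrite /iota_w -(card_preimset _ (@perm_inj _ v)); apply: eq_card => p.
by rewrite !inE permK invMg !permM.
Qed.

Lemma iotaE (v : 'S_n) (c : 'I_n) :
  iota_w v c = #|[set y | ((v^-1)%g y < (v^-1)%g c)%N && (c < y)%N]|.
Proof.
rewrite -{1}(mulg1 v) iota_swapE; apply: eq_card => p.
by rewrite !inE invg1 !perm1.
Qed.

Lemma card_gt m k : #|[set y : 'I_m | (k < y)%N]| = m - k.+1.
Proof.
rewrite -sum1_card big_mkcond /=.
under eq_bigr do rewrite inE.
elim: m => [|m IH]; first by rewrite big_ord0.
rewrite big_ord_recr /= IH; case: ltnP => /= H; lia.
Qed.

Lemma card_2pt (T : finType) (A B : {set T}) (k m : T) : k != m ->
  (forall y, y != k -> y != m -> (y \in A) = (y \in B)) ->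
  #|A| + ((k \in B) + (m \in B)) = #|B| + ((k \in A) + (m \in A)).
Proof.
move=> km H.
rewrite (cardsD1 k A) (cardsD1 k B) (cardsD1 m (A :\ k)) (cardsD1 m (B :\ k)).
have -> : A :\ k :\ m = B :\ k :\ m.
  apply/setP => y; rewrite !inE.
  by case: (eqVneq y m) => //= ym; case: (eqVneq y k) => //= yk; rewrite H.
rewrite !inE (eq_sym m k) km /=; lia.
Qed.


Lemma iota_bump (v : 'S_n) (k : 'I_n) : ((k + iota_w v k).+1 < n)%N ->
  exists u : 'S_n, iota_w u k = (iota_w v k).+1 /\
                   forall c, c != k -> iota_w u c = iota_w v c.
Proof.
move=> Hroom.
set P := (v^-1)%g; set a := P k.
have vP y : v (P y) = y by rewrite /P permKV.
have Pv p : P (v p) = p by rewrite /P permK.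
have Pinj : injective P by apply: perm_inj.
case: (pickP (fun p : 'I_n => (a < p)%N && (k < v p)%N)) => [p0 Hp0 | none]; last first.
  exfalso; move: Hroom; rewrite iotaE.
  have -> : [set y | (P y < P k)%N && (k < y)%N] = [set y : 'I_n | (k < y)%N].
    apply/setP => y; rewrite !inE; case: (ltnP k y) => ky; rewrite ?andbT ?andbF //.
    case: (ltngtP (P y) a) => // H.
      by have := none (P y); rewrite H vP ky.
    by move: ky; rewrite (Pinj _ _ (val_inj H)) ltnn.
  rewrite card_gt; have := ltn_ord k; lia.
case: (@arg_minnP _ p0 (fun p : 'I_n => (a < p)%N && (k < v p)%N) (fun p : 'I_n => val p) Hp0).
move=> b /andP[ab kvb] bmin.
have between y : (a < P y)%N -> (P y < b)%N -> ~~ (k < y)%N.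
  move=> ay yb; apply/negP => ky.
  by have := bmin (P y); rewrite ay vP ky => /(_ isT); rewrite leqNgt yb.
set m := v b.
have km : (k < m)%N by [].
have kneqm : k != m by rewrite neq_ltn km.
have Pm : P m = b by rewrite /m Pv.
exists (v * tperm k m)%g.
have key c : #|[set y | (P y < P (tperm k m c))%N && (c < tperm k m y)%N]|
   + ((k \in [set y | (P y < P c)%N && (c < y)%N]) + (m \in [set y | (P y < P c)%N && (c < y)%N]))
   = #|[set y | (P y < P c)%N && (c < y)%N]|
   + ((k \in [set y | (P y < P (tperm k m c))%N && (c < tperm k m y)%N])
      + (m \in [set y | (P y < P (tperm k m c))%N && (c < tperm k m y)%N])).
  apply: card_2pt => // y yk ym.
  have ty : tperm k m y = y by apply: tpermD; rewrite eq_sym.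
  rewrite !inE ty.
  case: (tpermP k m c) => [->|->|/eqP ck /eqP cm]; rewrite ?Pm -/a.
  - case: (ltnP k y) => ky; rewrite ?andbT ?andbF //.
    apply/idP/idP => H; last exact: ltn_trans H ab.
    case: (ltngtP a (P y)) => [ay|//|ay]; last by move: yk; rewrite -(Pinj _ _ (val_inj ay)) eqxx.
    by move: (between y ay H); rewrite ky.
  - case: (ltnP m y) => my; rewrite ?andbT ?andbF //.
    apply/idP/idP => H; first exact: ltn_trans H ab.
    case: (ltngtP a (P y)) => [ay|//|ay]; last by move: yk; rewrite -(Pinj _ _ (val_inj ay)) eqxx.
    by move: (between y ay H); rewrite (ltn_trans km my).
  - by [].
split.
  have := key k; rewrite iota_swapE tpermV -iotaE tpermL Pm !inE tpermL tpermR ltnn ab km.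
  rewrite Pm -/a [(b < a)%N]ltnNge (ltnW ab) ltnn /= andbF !addn0 addn1 => -> //.
move=> c ck; have := key c; rewrite iota_swapE tpermV -iotaE -/P.
case: (eqVneq c m) => [->|cm].
  rewrite tpermR !inE tpermL tpermR -/a Pm !ltnn !andbF [(m < k)%N]ltnNge (ltnW km) !andbF !addn0 => -> //.
have tc : tperm k m c = c by apply: tpermD; rewrite eq_sym.
rewrite tc !inE tpermL tpermR -/a Pm.
suff -> : ((a < P c)%N && (c < m)%N) + ((b < P c)%N && (c < k)%N)
        = ((a < P c)%N && (c < k)%N) + ((b < P c)%N && (c < m)%N) by move=> /eqP; rewrite eqn_add2r => /eqP.
case: (ltnP c k) => ck'.
  by rewrite (ltn_trans ck' km) addnC.
case: (ltnP c m) => cm' /=; rewrite ?addn0 //.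
rewrite !andbT !andbF addn0.
have kc : (k < c)%N.
  rewrite ltn_neqAle ck' andbT; apply: contra ck => /eqP h.
  by apply/eqP/val_inj; rewrite /= h.
suff -> : (a < P c)%N = (b < P c)%N by [].
case: (ltngtP a (P c)) => [ac | ca | ac].
- case: (ltngtP (P c) b) => [cb | bc | cb].
  + by move: (between c ac cb); rewrite kc.
  + by [].
  + exfalso; move/negP: cm; apply; apply/eqP; apply: Pinj; apply: val_inj; by rewrite /= cb Pm.
- by apply/esym/negbTE; rewrite -leqNgt ltnW // (ltn_trans ca ab).
- exfalso; move/negP: ck; apply; apply/eqP; apply: Pinj; apply: val_inj; by rewrite /= -ac.
Qed.

End Comb.

Local Open Scope ring_scope.
Section Theta.
Variable F : finFieldType.

Lemma abelian_F : abelian [set: F].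
Proof. by apply/centsP => x _ y _; apply: addrC. Qed.

Lemma exists_theta : {th : 'CF([set: F]) | th \is a linear_char & \sum_(t : F) th t = 0}.
Proof.
have cardF : #|Iirr [set: F]| = #|F| by rewrite card_Iirr_abelian ?abelian_F // cardsT.
have F1 : (1 < #|F|)%N.
  by apply/card_gt1P; exists 0, 1; split => //; rewrite eq_sym oner_eq0.
have N1 : (1 < Nirr [set: F])%N by rewrite -[Nirr _]card_ord cardF.
pose i : Iirr [set: F] := inord 1.
have i0 : i != 0 by rewrite -(inj_eq val_inj) /= inordK.
exists ('chi_i); first by move/char_abelianP: abelian_F; apply.
have := cfdot_irr i 0; rewrite (negPf i0) cfdotE irr0.
move/eqP; rewrite mulf_eq0 invr_eq0 pnatr_eq0 cardsT.
have -> : (#|F| == 0)%N = false by apply/negbTE; rewrite -lt0n (ltn_trans _ F1).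
move=> /= /eqP h; rewrite -[RHS]h; symmetry.
rewrite (eq_bigr (fun x => 'chi_i x)); last by move=> x _; rewrite cfun1E in_setT conjC1 mulr1.
by apply: eq_bigl => x; rewrite in_setT.
Qed.

Variable th : 'CF([set: F]).
Hypothesis thlin : th \is a linear_char.
Hypothesis thsum : \sum_(t : F) th t = 0.

Lemma thD a b : th (a + b) = th a * th b.
Proof. exact: (lin_charM thlin (in_setT a) (in_setT b)). Qed.

Lemma th0 : th 0 = 1.
Proof. exact: (lin_char1 thlin). Qed.

Lemma th_neq0 a : th a != 0.
Proof.
apply/eqP => h; have := thD a (- a); rewrite subrr th0 h mul0r.
by move/eqP; rewrite oner_eq0.
Qed.

Lemma th_nontriv : exists t, th t != 1.
Proof.
apply/existsP; rewrite -negb_forall; apply/negP => /forallP h.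
move: thsum; rewrite (eq_bigr (fun _ => 1)); last by move=> t _; apply/eqP.
rewrite sumr_const => /eqP; rewrite pnatr_eq0 => /eqP/card0_eq/(_ 0).
by rewrite !inE.
Qed.

Lemma th_sum c : \sum_(t : F) th (t * c) = reg_char c.
Proof.
rewrite /reg_char; case: eqP => [->|/eqP c0].
  by rewrite (eq_bigr (fun _ => 1)) ?sumr_const // => t _; rewrite mulr0 th0.
by rewrite -[RHS]thsum [RHS](reindex_inj (mulIf c0)).
Qed.


Variable n : nat.
Local Notation UTn := (UT F n).

Lemma abelian_UT : abelian UTn.
Proof. by apply/centsP => x _ y _; apply: addrC. Qed.

Definition flam (l x : 'M[F]_n) : F := \sum_(p : 'I_n * 'I_n) l p.1 p.2 * x p.1 p.2.

Lemma flamM l : {in UTn &, {morph flam l : x y / (x * y)%g >-> (x * y)%g}}.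
Proof.
move=> x y _ _; change (flam l (x + y) = flam l x + flam l y).
by rewrite /flam -big_split; apply: eq_bigr => p _; rewrite mxE mulrDr.
Qed.

Definition flam_morph l : {morphism UTn >-> F} := Morphism (flamM l).

Definition psi l : 'CF(UTn) := cfMorph ('Res[flam_morph l @* UTn] th).

Lemma psiE l x : x \in UTn -> psi l x = th (flam l x).
Proof.
move=> Hx; rewrite /psi cfMorphE // cfResE ?subsetT //.
exact: mem_morphim.
Qed.

Lemma psi_lin l : psi l \is a linear_char.
Proof. by apply: cfMorph_lin_char; apply: cfRes_lin_char. Qed.

Lemma psi_irr l : psi l \in irr UTn.
Proof. exact: lin_char_irr (psi_lin l). Qed.


Lemma flam_delta l c (k j : 'I_n) : flam l (c *: delta_mx k j) = l k j * c.
Proof.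
rewrite /flam (bigD1 (k, j)) //= big1 => [|[a b] /=].
  by rewrite !mxE !eqxx mulr1 addr0.
by rewrite xpair_eqE !mxE => /negPf ->; rewrite mulr0 mulr0.
Qed.

Definition Zc (l : 'M[F]_n) (u : 'S_n) :=
  forall k j : 'I_n, (k < j)%N -> (j - k <= iota_w u k)%N -> l k j = 0.

Lemma cfker_psi l : cfker (psi l) = [set x in UTn | th (flam l x) == 1].
Proof.
rewrite cfkerEchar ?lin_charW ?psi_lin // lin_char1 ?psi_lin //.
apply/setP => x; have [Hx|Hx] := boolP (x \in UTn).
  by rewrite !inE psiE //; move: Hx; rewrite inE => ->.
by rewrite !inE; move: Hx; rewrite inE => /negPf ->.
Qed.

Lemma ker_psi l u : (ut_w F u \subset cfker (psi l)) <-> Zc l u.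
Proof.
rewrite cfker_psi; split.
  move=> sub k j kj le; apply/eqP/negP => nz.
  have [t tn1] := th_nontriv.
  have := subsetP sub ((t / l k j) *: delta_mx k j).
  have nz' : l k j != 0 by apply/negP.
  rewrite !inE flam_delta mulrCA mulfV // mulr1 (negPf tn1) andbF => H.
  suff : false by []; apply: H.
  apply/forallP => a; apply/forallP => b; rewrite !mxE.
  have [-> | ak] := eqVneq a k; have [-> | bj] := eqVneq b j;
    rewrite ?eqxx ?(negPf ak) ?(negPf bj) /= ?mulr0 ?eqxx //.
  by rewrite kj le implybT.
move=> Z; apply/subsetP => x; rewrite !inE => /forallP Hx.
apply/andP; split.
  apply/forallP => a; apply/forallP => b; apply/implyP => nz.
  by have /forallP/(_ b)/implyP/(_ nz)/andP[] := Hx a.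
rewrite /flam big1 ?th0 // => [[a b]] _ /=.
case: (eqVneq (x a b) 0) => [->|nz]; first by rewrite mulr0.
have /forallP/(_ b)/implyP/(_ nz)/andP[ab le] := Hx a.
by rewrite (Z a b ab le) mul0r.
Qed.


Lemma delta_in_ut (w : 'S_n) (k j : 'I_n) :
  (delta_mx k j \in ut_w F w) = (k < j)%N && (j - k <= iota_w w k)%N.
Proof.
apply/idP/idP.
  by rewrite inE => /forallP/(_ k)/forallP/(_ j); rewrite mxE !eqxx oner_eq0.
move=> H; rewrite inE; apply/forallP => a; apply/forallP => b; rewrite mxE.
have [-> | ak] := eqVneq a k; have [-> | bj] := eqVneq b j;
  rewrite ?eqxx ?(negPf ak) ?(negPf bj) /= ?eqxx //.
by rewrite H implybT.
Qed.

Variable v : 'S_n.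

Definition Cnd (l : 'M[F]_n) := Zc l v /\
  forall k j : 'I_n, (k < j)%N -> (j - k = (iota_w v k).+1)%N -> l k j != 0.

Lemma largest_iff l : largest_in v (cfker (psi l)) <-> Cnd l.
Proof.
split.
  case/andP => /ker_psi Zv /forallP Hall; split => // k j kj Hj.
  apply/negP => /eqP l0.
  have room : ((k + iota_w v k).+1 < n)%N by have := ltn_ord j; lia.
  have [u [uk uc]] := iota_bump room.
  have Zu : Zc l u.
    move=> k' j' kj' le'.
    have [ek | nk] := eqVneq k' k; last by apply: Zv => //; rewrite -(uc _ nk).
    subst k'; move: le'; rewrite uk leq_eqVlt ltnS => /orP[/eqP e|le].
      by have -> : j' = j by apply: val_inj => /=; move: e; rewrite -Hj; lia.
    exact: Zv.
  have := implyP (Hall u) (proj2 (ker_psi l u) Zu).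
  move/subsetP/(_ (delta_mx k j)); rewrite !delta_in_ut kj uk -Hj leqnn.
  by rewrite Hj ltnn => /(_ isT).
case=> Zv Hnz; apply/andP; split; first exact/ker_psi.
apply/forallP => u; apply/implyP => /ker_psi Zu.
apply/subsetP => x; rewrite !inE => /forallP Hx; apply/forallP => a.
apply/forallP => b; apply/implyP => nz.
have /forallP/(_ b)/implyP/(_ nz)/andP[ab le] := Hx a.
rewrite ab /=; rewrite leqNgt; apply/negP => lt.
have jlt : (a + (iota_w v a).+1 < n)%N by have := ltn_ord b; lia.
pose j' := Ordinal jlt.
have ajp : (a < j')%N by rewrite /=; lia.
have dj : (j' - a = (iota_w v a).+1)%N by rewrite /=; lia.
have := Hnz a j' ajp dj; rewrite (Zu a j' ajp) ?eqxx //; rewrite dj; lia.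
Qed.


Lemma ut_entry (l : 'M[F]_n) (a b : 'I_n) : l \in UTn -> ~~ (a < b)%N -> l a b = 0.
Proof.
by rewrite inE => /forallP/(_ a)/forallP/(_ b)/implyP H nab; apply/eqP; exact: contraNT H nab.
Qed.

Lemma scaled_delta_UT c (a b : 'I_n) : (a < b)%N -> c *: delta_mx a b \in UTn.
Proof.
move=> ab; rewrite inE; apply/forallP => i; apply/forallP => j; rewrite !mxE.
have [-> | ia] := eqVneq i a; have [-> | jb] := eqVneq j b;
  rewrite ?eqxx ?(negPf ia) ?(negPf jb) /= ?mulr0 ?eqxx //.
by rewrite ab implybT.
Qed.

Lemma psi_inj l1 l2 : l1 \in UTn -> l2 \in UTn -> psi l1 = psi l2 -> l1 = l2.
Proof.
move=> H1 H2 e; apply/matrixP => a b.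
case: (ltnP a b) => [ab | ba]; last by rewrite !ut_entry // -leqNgt.
apply/eqP/negPn/negP => ne.
have d0 : l1 a b - l2 a b != 0 by rewrite subr_eq0.
have [t tn1] := th_nontriv.
set s := t / (l1 a b - l2 a b).
have yU := scaled_delta_UT s ab.
have := congr1 (fun f : 'CF(UTn) => f (s *: delta_mx a b)) e => /=; rewrite !psiE // !flam_delta.
have e1 : (l1 a b - l2 a b) * s = t by rewrite /s mulrCA mulfV // mulr1.
have -> : l1 a b * s = t + l2 a b * s by rewrite -e1 -mulrDl subrK.
rewrite thD => h.
have := mulIf (th_neq0 _) (etrans h (esym (mul1r _))).
by move/eqP; rewrite (negPf tn1).
Qed.


Definition Sp (k j : 'I_n) (t : F) : bool :=
  if (k < j)%N then (if (j - k <= iota_w v k)%N then t == 0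
                     else if (j - k == (iota_w v k).+1)%N then t != 0 else true)
  else t == 0.

Lemma cond_iff l :
  ((l \in UTn) && largest_in v (cfker (psi l))) = [forall k, forall j, Sp k j (l k j)].
Proof.
apply/idP/idP.
  case/andP => lU /largest_iff [Zv Hnz]; apply/forallP => k; apply/forallP => j.
  rewrite /Sp; case: (ltnP k j) => kj; last by rewrite ut_entry // -leqNgt.
  case: leqP => le; first by rewrite (Zv k j kj le).
  by case: eqP => // e; exact: Hnz.
move=> /forallP H.
have Hkj k j : Sp k j (l k j) := forallP (H k) j.
have lU : l \in UTn.
  rewrite inE; apply/forallP => a; apply/forallP => b; apply/implyP => nz.
  by have := Hkj a b; rewrite /Sp; case: ltnP => // _; rewrite (negPf nz).
rewrite lU /=; apply/largest_iff; split.
  by move=> k j kj le; have := Hkj k j; rewrite /Sp kj le => /eqP.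
by move=> k j kj e; have := Hkj k j; rewrite /Sp kj e ltnn eqxx.
Qed.

Lemma entry_sum (k j : 'I_n) (c : F) :
  (if (k < j)%N && (j - k <= iota_w v k)%N then one_char c else 1)
  * (if (k < j)%N && (j - k == (iota_w v k).+1)%N then reg_char c - one_char c else 1)
  * (if (k < j)%N && ((iota_w v k).+1 < j - k)%N then reg_char c else 1)
  = \sum_(t | Sp k j t) th (t * c).
Proof.
have s0 : \sum_(t | t == 0) th (t * c) = 1 by rewrite big_pred1_eq mul0r th0.
rewrite /Sp /one_char; case: (ltnP k j) => kj /=; last by rewrite s0 !mulr1.
case: (leqP (j - k) (iota_w v k)) => le.
  have e1 : (j - k == (iota_w v k).+1)%N = false by apply/negbTE; lia.
  have e2 : ((iota_w v k).+1 < j - k)%N = false by apply/negbTE; lia.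
  by rewrite s0 e1 e2 !mulr1.
case: (eqVneq (j - k)%N (iota_w v k).+1) => e.
  have e2 : ((iota_w v k).+1 < j - k)%N = false by apply/negbTE; lia.
  rewrite e2 !mulr1 mul1r.
  have := th_sum c; rewrite (bigD1 0) //= mul0r th0 => <-.
  by rewrite addrAC subrr add0r.
have e2 : ((iota_w v k).+1 < j - k)%N = true by apply/idP; lia.
rewrite e2 !mul1r -th_sum. by [].
Qed.


Definition mxf (f : {ffun 'I_n * 'I_n -> F}) : 'M[F]_n := \matrix_(i, j) f (i, j).
Definition fmx (l : 'M[F]_n) : {ffun 'I_n * 'I_n -> F} := [ffun p => l p.1 p.2].

Lemma mxf_bij : bijective mxf.
Proof.
exists fmx => [f | l]; first by apply/ffunP => [[i j]]; rewrite ffunE mxE.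
by apply/matrixP => i j; rewrite mxE ffunE.
Qed.

Lemma main_th (x : 'M[F]_n) : x \in UTn ->
  superchar v x =
    (\prod_(i < n) \prod_(j < n | (i < j)%N && (j - i <= iota_w v i)%N)
        one_char (x i j))
  * (\prod_(i < n) \prod_(j < n | (i < j)%N && (j - i == (iota_w v i).+1)%N)
        (reg_char (x i j) - one_char (x i j)))
  * (\prod_(i < n) \prod_(j < n | (i < j)%N && ((iota_w v i).+1 < j - i)%N)
        reg_char (x i j)).
Proof.
move=> xU.
pose h l := cfIirr (psi l).
have hE l : 'chi_(h l) = psi l := cfIirrE (psi_irr l).
have hinj : {in UTn &, injective h}.
  by move=> l1 l2 H1 H2 e; apply: psi_inj => //; rewrite -!hE e.
have himg : h @: UTn = setT.
  apply/eqP; rewrite eqEcard subsetT cardsT card_in_imset //.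
  by rewrite card_Iirr_abelian ?abelian_UT //=; apply: leqnn.
rewrite /superchar big_mkcond /=.
transitivity (\sum_(i in h @: UTn)
   (if largest_in v (cfker 'chi_i) then 'chi_i 1%g * 'chi_i x else 0)).
  by rewrite himg; apply: eq_bigl => i; rewrite in_setT.
rewrite big_imset //=.
transitivity (\sum_(l : 'M[F]_n | [forall k, forall j, Sp k j (l k j)])
                \prod_(p : 'I_n * 'I_n) th (l p.1 p.2 * x p.1 p.2)).
  rewrite big_mkcond [RHS](bigID (fun l => l \in UTn)) /=.
  rewrite [X in _ = _ + X]big1 ?addr0; last first.
    by move=> l /andP[H nU]; move: H; rewrite -cond_iff (negPf nU).
  rewrite [RHS]big_mkcond; apply: eq_bigr => l _; rewrite -cond_iff hE.
  case lU: (l \in UTn); rewrite /= ?andbF // andbT; case: ifP => // _.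
  by rewrite lin_char1 ?psi_lin // mul1r psiE // /flam (big_morph th thD th0).
rewrite (reindex mxf (onW_bij _ mxf_bij)) /=.
transitivity (\sum_(f in family (fun p : 'I_n * 'I_n => Sp p.1 p.2))
                \prod_(p : 'I_n * 'I_n) th (f p * x p.1 p.2)).
  apply: eq_big => [f | f _].
    apply/forallP/familyP => [H [k j] | H k]; first by have := forallP (H k) j; rewrite mxE.
    by apply/forallP => j; have := H (k, j); rewrite mxE.
  by apply: eq_bigr => [[k j]] _; rewrite mxE.
rewrite -(bigA_distr_big_dep (fun p : 'I_n * 'I_n => Sp p.1 p.2) (fun p t => th (t * x p.1 p.2))).
rewrite [X in _ = X * _ * _]big1 ?mul1r; last by move=> i _; apply: big1 => j _.
rewrite [X in X * _](eq_bigr (fun i : 'I_n => \prod_(j < n) (if (i < j)%N && (j - i == (iota_w v i).+1)%N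
       then reg_char (x i j) - one_char (x i j) else 1))); last by move=> i _; rewrite big_mkcond.
rewrite [X in _ * X](eq_bigr (fun i : 'I_n => \prod_(j < n) (if (i < j)%N && ((iota_w v i).+1 < j - i)%N
       then reg_char (x i j) else 1))); last by move=> i _; rewrite big_mkcond.
rewrite !pair_big -big_split /=; apply: eq_bigr => [[k j]] _ /=.
rewrite -entry_sum /one_char; case: ifP => _; by rewrite mul1r.
Qed.

End Theta.

Unset Implicit Arguments.
Set Strict Implicit.

Theorem corollary3p3 (F : finFieldType) (n : nat) (v : 'S_n) (x : 'M[F]_n) :
  x \in ut_set F n ->
  superchar v x =
    (\prod_(i < n) \prod_(j < n | (i < j)%N && (j - i <= iota_w v i)%N)
        one_char (x i j))
  * (\prod_(i < n) \prod_(j < n | (i < j)%N && (j - i == (iota_w v i).+1)%N)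
        (reg_char (x i j) - one_char (x i j)))
  * (\prod_(i < n) \prod_(j < n | (i < j)%N && ((iota_w v i).+1 < j - i)%N)
        reg_char (x i j)).
Proof.
move=> xU; have [th thlin thsum] := exists_theta F.
exact: (main_th thlin thsum v xU).
Qed.
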